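(* Let $i,j\in\mathbb{Z}^2$ be distinct and let $H$ be a finite DAG (finitely many nodes) containing $i$ and $j$ with $\mathrm{An}_H(i)\cap\mathrm{An}_H(j)=\emptyset$. Then $p_{c,2,\mathcal{P},H}=1$.
   Context: Oriented square lattice: node set $\mathbb{Z}^2$, with a directed edge $u\to v$ if and only if $v-u\in\{(1,0),(0,1)\}$; $E(\mathbb{Z}^2)$ denotes this edge set. A DAG $H$ here has $V(H)\subset\mathbb{Z}^2$ and $E(H)\subset E(\mathbb{Z}^2)$; $\mathrm{An}_H(u)$ is $u$ together with all nodes having a directed path to $u$ in $H$. Bernoulli bond percolation with parameter $p$: each edge of $E(\mathbb{Z}^2)$ is independently open with probability $p$; $P_p$ is the product measure. $C(k)$ is the set of nodes joined to $k$ by a path of open edges (orientation ignored), with those open edges. Enlargement $U(H)$: the random DAG with node set $\bigcup_{k\in V(H)}V(C(k))$ and edge set $E(H)\cup\bigcup_{k\in V(H)}E(C(k))$; equivalently, percolation under the measure $P_p^H$ on $\{0,1\}^{E(\mathbb{Z}^2)}$ in which edges of $E(H)$ are open with probability $1$ and all other edges independently open with probability $p$. $U(H)\in\mathcal{P}$ means $\mathrm{An}(i)\cap\mathrm{An}(j)\neq\emptyset$ in $U(H)$ (ancestors via directed open paths). Critical probability: $p_{c,2,\mathcal{P},H}=\inf\{p\in[0,1]: P_p(U(H)\in\mathcal{P})=1\}$. *)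

(* Defs.v *)
From Stdlib Require Import Reals ZArith List ClassicalEpsilon.
Import ListNotations.
Open Scope R_scope.

Definition node : Type := (Z * Z)%type.
Definition edge : Type := (node * node)%type.

Definition lattice_edge (e : edge) : Prop :=
  let '((a, b), (c, d)) := e in
  (c = a + 1 /\ d = b)%Z \/ (c = a /\ d = b + 1)%Z.

Definition edge_eq_dec (e e' : edge) : {e = e'} + {e <> e'}.
Proof. repeat decide equality; apply Z.eq_dec. Defined.

Inductive reach (ok : edge -> Prop) : node -> node -> Prop :=
| reach_refl : forall u, reach ok u u
| reach_step : forall u w t, lattice_edge (u, w) -> ok (u, w) -> reach ok w t -> reach ok u t.

Definition in_box (n : nat) (u : node) : Prop :=
  (- Z.of_nat n <= fst u <= Z.of_nat n)%Z /\ (- Z.of_nat n <= snd u <= Z.of_nat n)%Z.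

Definition zrange (n : nat) : list Z :=
  map (fun k => (Z.of_nat k - Z.of_nat n)%Z) (seq 0 (2 * n + 1)).

Definition box_nodes (n : nat) : list node := list_prod (zrange n) (zrange n).

Definition box_edges (n : nat) : list edge :=
  flat_map (fun u =>
     let '(a, b) := u in
     [ (u, ((a + 1)%Z, b)); (u, (a, (b + 1)%Z)) ]) (box_nodes n).

(** Configurations: omega : edge -> bool (true = open). *)
Definition upd (w : edge -> bool) (e : edge) (b : bool) : edge -> bool :=
  fun e' => if edge_eq_dec e' e then b else w e'.

Definition indicator (P : Prop) : R :=
  if excluded_middle_informative P then 1 else 0.

(** Probability, under independent Bernoulli(p) states of the edges in [l]
    (all other edges taking their value in [w]), of the event [A]. *)
Fixpoint cyl_prob (p : R) (l : list edge) (w : edge -> bool)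
         (A : (edge -> bool) -> Prop) : R :=
  match l with
  | [] => indicator (A w)
  | e :: l' => p * cyl_prob p l' (upd w e true) A
               + (1 - p) * cyl_prob p l' (upd w e false) A
  end.

(** Under P_p^H, edge e is open iff it is in E(H) or its Bernoulli state is open. *)
Definition openH (EH : list edge) (w : edge -> bool) (e : edge) : Prop :=
  In e EH \/ w e = true.

Definition event_box (EH : list edge) (i j : node) (n : nat) (w : edge -> bool) : Prop :=
  exists v,
    reach (fun e => openH EH w e /\ in_box n (fst e) /\ in_box n (snd e)) v i /\
    reach (fun e => openH EH w e /\ in_box n (fst e) /\ in_box n (snd e)) v j.

(** P_p(U(H) in P) is the supremum of the increasing cylinder probabilities
    P_p^H(E_n) (continuity of the product measure from below, since the event
    {An(i) cap An(j) <> empty} is the increasing union of the E_n). *)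
Definition probP_is (p : R) (EH : list edge) (i j : node) (r : R) : Prop :=
  is_lub (fun x => exists n : nat,
            x = cyl_prob p (box_edges n) (fun _ => false) (event_box EH i j n)) r.

Definition pc_is (EH : list edge) (i j : node) (x : R) : Prop :=
  (forall p, 0 <= p <= 1 -> probP_is p EH i j 1 -> x <= p) /\
  (forall y, (forall p, 0 <= p <= 1 -> probP_is p EH i j 1 -> y <= p) -> y <= x).

(* Main.v *)
Require Import Defs.
From Stdlib Require Import Reals ZArith List Lia Lra Psatz ClassicalEpsilon.
Import ListNotations.
Open Scope R_scope.

Lemma pow_le1 (x : R) k : 0 <= x <= 1 -> x ^ k <= 1.
Proof. intros H; induction k; simpl; nra. Qed.

Lemma pow_anti (x : R) m n : 0 <= x <= 1 -> (m <= n)%nat -> x ^ n <= x ^ m.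
Proof.
  intros H Hmn. replace n with (m + (n - m))%nat by lia. rewrite pow_add.
  assert (0 <= x ^ m) by (apply pow_le; lra).
  assert (x ^ (n - m) <= 1) by (apply pow_le1; auto).
  assert (0 <= x ^ (n - m)) by (apply pow_le; lra). nra.
Qed.

Lemma cyl_bounds p l : 0 <= p <= 1 -> forall w A, 0 <= cyl_prob p l w A <= 1.
Proof.
  intros Hp; induction l as [|e l IH]; intros w A; simpl.
  - unfold indicator; destruct excluded_middle_informative; lra.
  - destruct (IH (upd w e true) A); destruct (IH (upd w e false) A); nra.
Qed.

Lemma cyl_mono p l : 0 <= p <= 1 -> forall w (A B : (edge -> bool) -> Prop),
  (forall w', A w' -> B w') -> cyl_prob p l w A <= cyl_prob p l w B.
Proof.
  intros Hp; induction l as [|e l IH]; intros w A B HAB; simpl.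
  - unfold indicator; do 2 destruct excluded_middle_informative; try lra.
    exfalso; auto.
  - pose proof (IH (upd w e true) A B HAB); pose proof (IH (upd w e false) A B HAB).
    nra.
Qed.

Lemma cyl_compl p l : forall w (A : (edge -> bool) -> Prop),
  cyl_prob p l w A + cyl_prob p l w (fun w' => ~ A w') = 1.
Proof.
  induction l as [|e l IH]; intros w A; simpl.
  - unfold indicator; do 2 destruct excluded_middle_informative; try lra.
    + contradiction.
    + exfalso; auto.
  - pose proof (IH (upd w e true) A); pose proof (IH (upd w e false) A).
    replace (cyl_prob p l (upd w e true) (fun w' => ~ A w')) with
      (1 - cyl_prob p l (upd w e true) A) by lra.
    replace (cyl_prob p l (upd w e false) (fun w' => ~ A w')) with
      (1 - cyl_prob p l (upd w e false) A) by lra.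
    ring.
Qed.

Lemma cyl_F_lower p (L0 : list edge) : 0 <= p <= 1 -> forall l w M,
  (forall e, In e L0 -> ~ In e l -> w e = false) ->
  (forall e, In e L0 -> In e l -> In e M) ->
  (1 - p) ^ (length M) <= cyl_prob p l w (fun w' => forall e, In e L0 -> w' e = false).
Proof.
  intros Hp; induction l as [|e l IH]; intros w M H1 H2; simpl.
  - unfold indicator; destruct excluded_middle_informative as [_|n].
    + apply pow_le1; lra.
    + exfalso; apply n; intros e He; apply H1; auto.
  - destruct (in_dec edge_eq_dec e L0) as [eL|eL];
    destruct (in_dec edge_eq_dec e l) as [el|el].
    2: {
      assert (HM : In e M) by (apply H2; simpl; auto).
      pose proof (remove_length_lt edge_eq_dec M e HM) as Hlen.
      assert (HY : (1 - p) ^ length (remove edge_eq_dec e M) <=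
               cyl_prob p l (upd w e false) (fun w' => forall e, In e L0 -> w' e = false)).
      { apply IH.
        - intros e' He' Hn. unfold upd; destruct edge_eq_dec; auto.
          apply H1; auto. intros [->|?]; auto.
        - intros e' He' Hin. apply in_in_remove.
          + intros ->; auto.
          + apply H2; simpl; auto. }
      pose proof (cyl_bounds p l Hp (upd w e true) (fun w' => forall e, In e L0 -> w' e = false)).
      pose proof (pow_anti (1 - p) (S (length (remove edge_eq_dec e M))) (length M)
                    ltac:(lra) Hlen).
      simpl in H0. nra. }
    all: assert (HX : (1 - p) ^ length M <=
               cyl_prob p l (upd w e true) (fun w' => forall e, In e L0 -> w' e = false))
      by (apply IH; [intros e' He' Hn; unfold upd; destruct edge_eq_dec;
                     [subst; contradiction| apply H1; auto; intros [->|?]; auto]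
                    | intros e' He' Hin; apply H2; simpl; auto]).
    all: assert (HY : (1 - p) ^ length M <=
               cyl_prob p l (upd w e false) (fun w' => forall e, In e L0 -> w' e = false))
      by (apply IH; [intros e' He' Hn; unfold upd; destruct edge_eq_dec;
                     [subst; contradiction| apply H1; auto; intros [->|?]; auto]
                    | intros e' He' Hin; apply H2; simpl; auto]).
    all: nra.
Qed.

Lemma cyl_one l : forall w (A : (edge -> bool) -> Prop),
  (forall w', (forall e, In e l -> w' e = true) -> (forall e, ~ In e l -> w' e = w e) -> A w') ->
  cyl_prob 1 l w A = 1.
Proof.
  induction l as [|a l IH]; intros w A H; simpl.
  - unfold indicator; destruct excluded_middle_informative as [|n]; auto.
    exfalso; apply n; apply H; intros; [contradiction|reflexivity].
  - assert (E : cyl_prob 1 l (upd w a true) A = 1).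
    { apply IH. intros w' H1 H2. apply H.
      - intros e' [Heq|He'].
        + subst a. destruct (in_dec edge_eq_dec e' l); auto.
          rewrite H2 by auto. unfold upd; destruct edge_eq_dec; congruence.
        + auto.
      - intros e' He'. rewrite H2 by (intro; apply He'; right; auto).
        unfold upd; destruct edge_eq_dec; [subst; exfalso; apply He'; left; auto | auto]. }
    rewrite E; ring.
Qed.

Definition preds (VH : list node) : list edge :=
  flat_map (fun v => [(((fst v - 1)%Z, snd v), v); ((fst v, (snd v - 1)%Z), v)]) VH.

Lemma in_preds VH u v : lattice_edge (u, v) -> In v VH -> In (u, v) (preds VH).
Proof.
  destruct u as [a b], v as [c d]; simpl; intros H Hv.
  apply in_flat_map; exists (c, d); split; auto; simpl.
  destruct H as [[-> ->]|[-> ->]].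
  - left. replace (a + 1 - 1)%Z with a by lia. reflexivity.
  - right; left. replace (b + 1 - 1)%Z with b by lia. reflexivity.
Qed.

Lemma reach_H_of (VH : list node) (EH : list edge) ok v t : reach ok v t ->
  (forall e, ok e -> lattice_edge e -> In (snd e) VH -> In e EH) ->
  (forall e, In e EH -> lattice_edge e /\ In (fst e) VH /\ In (snd e) VH) ->
  In t VH -> In v VH /\ reach (fun e => In e EH) v t.
Proof.
  induction 1 as [u|u w t Hl Hok Hr IH]; intros Hok' Hed Ht.
  - split; auto; constructor.
  - destruct IH as [Hw Hr']; auto.
    assert (Hin : In (u, w) EH) by (apply Hok'; auto).
    split.
    + exact (proj1 (proj2 (Hed _ Hin))).
    + eapply reach_step; eauto.
Qed.

Lemma reach_trans ok a b c : reach ok a b -> reach ok b c -> reach ok a c.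
Proof. induction 1; intros; auto. eapply reach_step; eauto. Qed.

Lemma hpath (ok : edge -> Prop) k : forall a c b, c = (a + Z.of_nat k)%Z ->
  (forall x, (a <= x < c)%Z -> ok ((x, b), ((x + 1)%Z, b))) -> reach ok (a, b) (c, b).
Proof.
  induction k; intros a c b Hc H.
  - simpl in Hc. replace c with a by lia. constructor.
  - apply reach_step with ((a + 1)%Z, b).
    + simpl; left; split; reflexivity.
    + apply H; lia.
    + apply IHk; [lia|]. intros x Hx; apply H; lia.
Qed.

Lemma vpath (ok : edge -> Prop) k : forall a c b, c = (a + Z.of_nat k)%Z ->
  (forall x, (a <= x < c)%Z -> ok ((b, x), (b, (x + 1)%Z))) -> reach ok (b, a) (b, c).
Proof.
  induction k; intros a c b Hc H.
  - simpl in Hc. replace c with a by lia. constructor.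
  - apply reach_step with (b, (a + 1)%Z).
    + simpl; right; split; reflexivity.
    + apply H; lia.
    + apply IHk; [lia|]. intros x Hx; apply H; lia.
Qed.

Lemma in_zrange n a : (- Z.of_nat n <= a <= Z.of_nat n)%Z -> In a (zrange n).
Proof.
  intros H. unfold zrange. apply in_map_iff.
  exists (Z.to_nat (a + Z.of_nat n)); split.
  - rewrite Z2Nat.id; lia.
  - apply in_seq; lia.
Qed.

Lemma box_edge_h n a b : in_box n (a, b) -> In ((a, b), ((a + 1)%Z, b)) (box_edges n).
Proof.
  intros [H1 H2]; simpl in *. unfold box_edges. apply in_flat_map.
  exists (a, b); split; [|simpl; auto].
  unfold box_nodes; apply in_prod; apply in_zrange; auto.
Qed.

Lemma box_edge_v n a b : in_box n (a, b) -> In ((a, b), (a, (b + 1)%Z)) (box_edges n).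
Proof.
  intros [H1 H2]; simpl in *. unfold box_edges. apply in_flat_map.
  exists (a, b); split; [|simpl; auto].
  unfold box_nodes; apply in_prod; apply in_zrange; auto.
Qed.

Lemma path_box (EH : list edge) n (w' : edge -> bool) :
  (forall e, In e (box_edges n) -> w' e = true) -> forall a b c d,
  in_box n (a, b) -> in_box n (c, d) -> (a <= c)%Z -> (b <= d)%Z ->
  reach (fun e => openH EH w' e /\ in_box n (fst e) /\ in_box n (snd e)) (a, b) (c, d).
Proof.
  intros Hw a b c d [Ha Hb] [Hc Hd] Hac Hbd; simpl in *.
  apply reach_trans with (c, b).
  - apply (hpath _ (Z.to_nat (c - a))); [lia|].
    intros x Hx. assert (Hbx : in_box n (x, b)) by (split; simpl; lia).
    split; [right; apply Hw; apply box_edge_h; auto|].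
    split; auto. split; simpl; lia.
  - apply (vpath _ (Z.to_nat (d - b))); [lia|].
    intros x Hx. assert (Hbx : in_box n (c, x)) by (split; simpl; lia).
    split; [right; apply Hw; apply box_edge_v; auto|].
    split; auto. split; simpl; lia.
Qed.

Theorem mainTheorem8 (VH : list node) (EH : list edge) (i j : node)
  (Hedges : forall e, In e EH -> lattice_edge e /\ In (fst e) VH /\ In (snd e) VH)
  (Hi : In i VH) (Hj : In j VH) (Hij : i <> j)
  (Hdisj : ~ exists v, reach (fun e => In e EH) v i /\ reach (fun e => In e EH) v j) :
  pc_is EH i j 1.
Proof.
  split.
  - intros p Hp Hlub. destruct (Rle_lt_dec 1 p) as [|Hlt]; auto. exfalso.
    set (L0 := preds VH).
    set (F := fun w' : edge -> bool => forall e, In e L0 -> w' e = false).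
    set (c := (1 - p) ^ length L0).
    assert (cpos : 0 < c) by (apply pow_lt; lra).
    assert (upper : forall n,
      cyl_prob p (box_edges n) (fun _ => false) (event_box EH i j n) <= 1 - c).
    { intro n. eapply Rle_trans.
      - apply cyl_mono with (B := fun w => ~ F w); [lra|].
        intros w [v [Hvi Hvj]] HF.
        assert (Hok : forall e, (openH EH w e /\ in_box n (fst e) /\ in_box n (snd e)) ->
                  lattice_edge e -> In (snd e) VH -> In e EH).
        { intros [u x] [[Hin|Hwe] _] Hl Hs; auto. exfalso.
          rewrite (HF (u, x) (in_preds VH u x Hl Hs)) in Hwe; discriminate. }
        destruct (reach_H_of VH EH _ _ _ Hvi Hok Hedges Hi) as [_ R1].
        destruct (reach_H_of VH EH _ _ _ Hvj Hok Hedges Hj) as [_ R2].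
        apply Hdisj; exists v; auto.
      - pose proof (cyl_compl p (box_edges n) (fun _ => false) F).
        pose proof (cyl_F_lower p L0 ltac:(lra) (box_edges n) (fun _ => false) L0
                      ltac:(auto) ltac:(auto)).
        fold F in H0. unfold c. lra. }
    destruct Hlub as [_ Hleast].
    assert (1 <= 1 - c) by (apply Hleast; intros x [n ->]; apply upper).
    lra.
  - intros y Hy. apply Hy; [lra|]. split.
    + intros x [n ->]. apply cyl_bounds; lra.
    + intros b Hb. apply Hb.
      destruct i as [i1 i2], j as [j1 j2].
      exists (Z.to_nat (Z.abs i1 + Z.abs i2 + Z.abs j1 + Z.abs j2)).
      symmetry; apply cyl_one. intros w' Htrue _.
      exists (Z.min i1 j1, Z.min i2 j2). split; apply path_box; auto;
        unfold in_box; simpl; lia.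
Qed.
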